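(* Suppose $0<1/n\ll\nu,1/k,1/\ell$ and $\nu\ll\alpha,1-\alpha$, where $\alpha\in(0,1)$ and $k\ge2$, $\ell$ are integers. Let $F$ be an $\ell$-vertex $k$-graph and $H$ an $n$-vertex $k$-graph. If $t_{\rm inj}(F,H)=\alpha\pm\nu$, then there exists an $n$-vertex $k$-graph $G$ on $V(H)$ with $t_{\rm inj}(F,G)=\alpha\pm1/n$ and $|G\triangle H|\le\big(\frac{2\nu}{\min\{\alpha,1-\alpha\}}\big)^{1/\ell}\binom nk$.
   Context: Hierarchy convention: a statement asserted for $0<a_1\ll a_2\ll\dots$ means there are non-decreasing functions such that it holds whenever each parameter is at most the corresponding function of the parameters to its right; integer parameters appear as reciprocals. $x=y\pm z$ means $|x-y|\le z$. A $k$-graph is a $k$-uniform hypergraph identified with its edge set. For $k$-graphs $F,H$ with $|V(H)|=n$, $\mathrm{inj}(F,H)$ is the number of injective maps $f:V(F)\to V(H)$ mapping every edge of $F$ onto an edge of $H$, and $t_{\rm inj}(F,H)=\mathrm{inj}(F,H)/(n)_{|V(F)|}$, where $(n)_r=n(n-1)\cdots(n-r+1)$. *)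

(* Defs.v *)
From mathcomp Require Import all_boot.
From Stdlib Require Import Reals.

Set Implicit Arguments.
Unset Strict Implicit.
Unset Printing Implicit Defensive.

Definition kgraph (k n : nat) (H : {set {set 'I_n}}) : bool :=
  [forall e in H, #|e| == k].

Definition inj_hom (l n : nat) (F : {set {set 'I_l}}) (H : {set {set 'I_n}}) : nat :=
  #|[set f : {ffun 'I_l -> 'I_n} |
       injectiveb f && [forall e in F, (f @: e) \in H]]|.

Definition t_inj (l n : nat) (F : {set {set 'I_l}}) (H : {set {set 'I_n}}) : R :=
  (INR (inj_hom F H) / INR (n ^_ l))%R.

Definition symdiff_card (n : nat) (G H : {set {set 'I_n}}) : nat :=
  #|(G :\: H) :|: (H :\: G)|.

(* Main.v *)
Require Import Defs.
From mathcomp Require Import all_boot.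
From mathcomp Require Import zify.
Set Implicit Arguments. Unset Strict Implicit. Unset Printing Implicit Defensive.

Section Comb.
Variables (l n : nat).
Local Notation FF := {ffun 'I_l -> 'I_n}.

Definition Inj : {set FF} := [set f : FF | injectiveb f].

Lemma card_Inj : #|Inj| = n ^_ l.
Proof. by rewrite /Inj card_inj_ffuns !card_ord. Qed.

Lemma dcount (I J : finType) (A : {set I}) (B : {set J}) (R : I -> J -> bool) :
  \sum_(i in A) #|[set j in B | R i j]| = \sum_(j in B) #|[set i in A | R i j]|.
Proof.
have E (X : finType) (C : {set X}) (P : X -> bool) :
  #|[set x in C | P x]| = \sum_(x in C) (P x : nat).
  rewrite -sum1_card big_mkcond /= [RHS]big_mkcond /=.
  by apply: eq_bigr => x _; rewrite inE; case: (x \in C); case: (P x).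
under eq_bigr do rewrite E.
rewrite exchange_big /=; apply: eq_bigr => j _; by rewrite E.
Qed.

Lemma card_bigcup_le (T I : finType) (r : seq I) (P : pred I) (A : I -> {set T}) :
  #|\bigcup_(i <- r | P i) A i| <= \sum_(i <- r | P i) #|A i|.
Proof.
elim: r => [|i r IH]; first by rewrite !big_nil cards0.
rewrite !big_cons; case: (P i) => //.
by apply: leq_trans (leq_card_setU _ _) _; rewrite leq_add2l.
Qed.

End Comb.

Section Sym.
Variables (l n : nat).
Local Notation FF := {ffun 'I_l -> 'I_n}.

Definition sw (a b z : 'I_n) := if z == a then b else if z == b then a else z.
Lemma swK a b : involutive (sw a b).
Proof. move=> z; rewrite /sw; case: (eqVneq z a) => [->|za].
  by rewrite eqxx; case: eqVneq.
case: (eqVneq z b) => [->|zb]; first by rewrite eqxx.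
by rewrite (negPf za) (negPf zb).
Qed.
Lemma sw_inj a b : injective (sw a b). Proof. exact: inv_inj (swK a b). Qed.

Definition X (a b : 'I_l) (x y : 'I_n) : {set FF} :=
  [set f in Inj l n | (f a == x) && (f b == y)].

Lemma X_sym a b x y x' y' : x != y -> x' != y' -> #|X a b x y| <= #|X a b x' y'|.
Proof.
move=> xy xy'.
pose y1 := sw x x' y.
pose pi z := sw y1 y' (sw x x' z).
have pi_inj : injective pi by move=> z1 z2 /sw_inj /sw_inj.
have y1x' : y1 != x'.
  rewrite /y1 /sw (eq_sym y x) (negPf xy); case: (eqVneq y x') => [<-|yx'] //.

have pix : pi x = x'.
  rewrite /pi /sw eqxx (eq_sym x' y1) (negPf y1x') (negPf xy') //.
have piy : pi y = y'.
  by rewrite /pi -/(sw x x' y) -/y1 /sw eqxx.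
pose phi (f : FF) := [ffun i => pi (f i)].
have phi_inj : injective phi.
  move=> f g /ffunP E; apply/ffunP => i; move: (E i); rewrite !ffunE; exact: pi_inj.
rewrite -(card_imset _ phi_inj); apply: subset_leq_card.
apply/subsetP => g /imsetP [f]; rewrite /X /Inj !inE => /andP [/injectiveP fi /andP [/eqP fa /eqP fb]] ->.
rewrite !ffunE fa fb pix piy !eqxx !andbT; apply/injectiveP => i j.
rewrite !ffunE => /pi_inj; exact: fi.
Qed.

Lemma D2_card : #|[set q : 'I_n * 'I_n | q.1 != q.2]| = n * n.-1.
Proof.
have E : #|[set q : 'I_n * 'I_n | q.1 == q.2]| = n.
  have -> : [set q : 'I_n * 'I_n | q.1 == q.2] = (fun z => (z, z)) @: [set: 'I_n].
    apply/setP => -[u v]; rewrite !inE /=; apply/idP/imsetP => [/eqP ->|[z _ [-> ->]]] //.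
    by apply: (ex_intro2 _ _ v); rewrite ?inE.
  have zi : injective (fun z : 'I_n => (z, z)) by move=> z1 z2 [].
  by rewrite (card_imset _ zi) cardsT card_ord.
have := cardsC [set q : 'I_n * 'I_n | q.1 == q.2].
rewrite E card_prod card_ord.
have -> : ~: [set q : 'I_n * 'I_n | q.1 == q.2] = [set q | q.1 != q.2].
  by apply/setP => q; rewrite !inE.
move: #|_| => c Hc; case: n E Hc => [|m] /= _ Hc; nia.
Qed.

Lemma X_bound a b x y : x != y -> #|X a b x y| * (n * n.-1) <= n ^_ l.
Proof.
move=> xy; rewrite -D2_card -card_Inj mulnC -sum_nat_const.
apply: leq_trans (_ : \sum_(q in [set q : 'I_n * 'I_n | q.1 != q.2]) #|X a b q.1 q.2| <= _).
  apply: leq_sum => q; rewrite inE; exact: X_sym.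
have -> : \sum_(q in [set q : 'I_n * 'I_n | q.1 != q.2]) #|X a b q.1 q.2| =
  \sum_(q in [set q : 'I_n * 'I_n | q.1 != q.2])
     #|[set f in Inj l n | (fun q f => (f a == q.1) && (f b == q.2)) q f]|.
  by [].
rewrite dcount -sum1_card; apply: leq_sum => f _.
apply: leq_trans (_ : #|[set (f a, f b)]| <= _); last by rewrite cards1.
apply: subset_leq_card; apply/subsetP => q; rewrite !inE => /andP [_ /andP [/eqP -> /eqP ->]].
by case: q.
Qed.

End Sym.

Section Lip.
Variables (l n : nat).
Local Notation FF := {ffun 'I_l -> 'I_n}.

Definition SG (F : {set {set 'I_l}}) (G : {set {set 'I_n}}) : {set FF} :=
  [set f : FF | injectiveb f && [forall e in F, (f @: e) \in G]].

Lemma inj_homE F G : inj_hom F G = #|SG F G|. Proof. by []. Qed.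

Lemma SG_mono F (G G' : {set {set 'I_n}}) : G \subset G' -> SG F G \subset SG F G'.
Proof.
move=> /subsetP GG; apply/subsetP => f; rewrite !inE => /andP [-> /forall_inP H] /=.
by apply/forall_inP => e /H /GG.
Qed.

Lemma lip k (F : {set {set 'I_l}}) (G G' : {set {set 'I_n}}) e : kgraph k F -> 1 < k -> G \subset G' -> G' :\: G \subset [set e] ->
  #|e| <= k ->
  inj_hom F G <= inj_hom F G' /\
  (inj_hom F G' - inj_hom F G) * (n * n.-1) <= l * l * (k * k) * n ^_ l.
Proof.
move=> /forall_inP kF k1 GG' dG ek; rewrite !inj_homE.
have sub := SG_mono F GG'; split; first exact: subset_leq_card.
pose Q := [set q in setX (setX (setX [set: 'I_l] [set: 'I_l]) e) e | q.1.2 != q.2].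
have Bad : SG F G' :\: SG F G \subset \bigcup_(q in Q) X q.1.1.1 q.1.1.2 q.1.2 q.2.
  apply/subsetP => f; rewrite !inE negb_and => /andP [Hn /andP [fi /forall_inP fG']].
  rewrite fi /= in Hn.
  have [eps epsF feps] : exists2 eps, eps \in F & f @: eps \notin G.
    apply/exists_inP; move: Hn; rewrite negb_forall_in; exact: id.
  have : f @: eps \in G' :\: G by rewrite inE feps fG'.
  move/(subsetP dG); rewrite inE => /eqP fe.
  have : 1 < #|eps| by rewrite (eqP (kF _ epsF)).
  case/card_gt1P => a [b [aeps beps ab]].
  apply/bigcupP; exists (a, b, f a, f b); last first.
    by rewrite /X /Inj !inE fi !eqxx.
  rewrite !inE /= -fe !imset_f //=.
  by move/injectiveP: fi => fi; apply/negP => /eqP /fi /eqP; rewrite (negPf ab).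
have cardQ : #|Q| <= l * l * (k * k).
  apply: leq_trans (_ : #|setX (setX (setX [set: 'I_l] [set: 'I_l]) e) e| <= _).
    by apply: subset_leq_card; apply/subsetP => q; rewrite inE => /andP [].
  rewrite !cardsX !cardsT card_ord.
  by rewrite -mulnA leq_mul // leq_mul.
have -> : #|SG F G'| - #|SG F G| = #|SG F G' :\: SG F G|.
  by rewrite cardsD (setIidPr sub).
apply: leq_trans (leq_mul (subset_leq_card Bad) (leqnn _)) _.
apply: leq_trans (leq_mul (card_bigcup_le _ _ _) (leqnn _)) _.
rewrite big_distrl /=.
apply: leq_trans (_ : \sum_(q in Q) n ^_ l <= _).
  apply: leq_sum => q; rewrite inE => /andP [_ qq]; exact: X_bound.
rewrite sum_nat_const; exact: leq_mul.
Qed.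

End Lip.

Lemma sup_card (T : finType) (A : {set T}) u : #|A| <= u ->
  #|[set U : {set T} | (#|U| == u) && (A \subset U)]| = 'C(#|T| - #|A|, u - #|A|).
Proof.
move=> Au.
have cC : #|~: A| = #|T| - #|A| by rewrite -(cardsC A) addKn.
rewrite -cC -cards_draws.
have -> : [set U : {set T} | (#|U| == u) && (A \subset U)] =
   (fun B : {set T} => A :|: B) @: [set B : {set T} | B \subset ~: A & #|B| == u - #|A|].
  apply/setP => U; rewrite inE; apply/idP/imsetP.
    case/andP => /eqP Uu AU; exists (U :\: A).
      rewrite inE; apply/andP; split; first by apply/subsetP => x; rewrite !inE => /andP [].
      by rewrite cardsD (setIidPr AU) Uu.
    apply/setP => x; rewrite !inE; case: (boolP (x \in A)) => //= xA.
    by rewrite (subsetP AU).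
  case=> B; rewrite inE => /andP [BA /eqP Bc] ->.
  rewrite subsetUl andbT cardsU.
  have -> : A :&: B = set0.
    apply/setP => x; rewrite !inE; apply/negP => /andP [xA xB].
    by move/subsetP: BA => /(_ x xB); rewrite inE xA.
  by rewrite cards0 subn0 Bc subnKC.
apply: card_in_imset => B1 B2; rewrite !inE => /andP [B1A _] /andP [B2A _] E.
have F (B : {set T}) : B \subset ~: A -> B = (A :|: B) :&: ~: A.
  move=> BA; rewrite setIUl setICr set0U; exact/esym/setIidPl.
by rewrite (F _ B1A) (F _ B2A) E.
Qed.

Section Avg.
Variables (l n : nat).
Local Notation FF := {ffun 'I_l -> 'I_n}.

Lemma avg (S : {set FF}) u : S \subset Inj l n -> l <= u <= n ->
  exists U : {set 'I_n}, #|U| = u /\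
   #|S| * u ^_ l <= #|[set f in S | f @: [set: 'I_l] \subset U]| * n ^_ l.
Proof.
move=> SI /andP [lu un].
pose Us := [set U : {set 'I_n} | #|U| == u].
pose c := 'C(n - l, u - l).
have imc (f : FF) : f \in Inj l n -> #|[set U in Us | f @: [set: 'I_l] \subset U]| = c.
  rewrite inE => /injectiveP fi.
  have Ec : #|f @: [set: 'I_l]| = l by rewrite card_imset // cardsT card_ord.
  have := @sup_card _ (f @: [set: 'I_l]) u; rewrite Ec card_ord /c => <- //.
  by apply: eq_card => U; rewrite !inE.
have sumc (S' : {set FF}) : S' \subset Inj l n ->
  \sum_(U in Us) #|[set f in S' | f @: [set: 'I_l] \subset U]| = #|S'| * c.
  move=> /subsetP S'I.
  rewrite (dcount Us S' (fun U f => f @: [set: 'I_l] \subset U)) -sum_nat_const.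
  by apply: eq_bigr => f /S'I /imc.
have cntI U : U \in Us -> #|[set f in Inj l n | f @: [set: 'I_l] \subset U]| = u ^_ l.
  rewrite inE => /eqP Uu; rewrite -Uu -[l in RHS](card_ord l) -card_inj_ffuns_on.
  apply: eq_card => f; rewrite !inE andbC; congr (_ && _).
  apply/subsetP/forallP => [H x | H _ /imsetP [x _ ->]]; last exact: H.
  by apply: H; rewrite imset_f.
have UsI : #|Us| * u ^_ l = n ^_ l * c.
  rewrite -(card_Inj l n) -(sumc (Inj l n)) // -sum_nat_const.
  by apply: eq_bigr => U /cntI.
have Us0 : 0 < #|Us| by rewrite /Us card_draws card_ord bin_gt0.
have [U0 U0s U0max] := eq_bigmax_cond
   (fun U : {set 'I_n} => #|[set f in S | f @: [set: 'I_l] \subset U]|) Us0.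
exists U0; split; first by move: U0s; rewrite inE => /eqP.
have le1 : #|S| * c <= #|Us| * #|[set f in S | f @: [set: 'I_l] \subset U0]|.
  rewrite -sumc // -U0max -sum_nat_const; apply: leq_sum => U UU.
  exact: leq_bigmax_cond.
rewrite -(leq_pmul2l Us0) mulnCA UsI mulnA.
by rewrite mulnAC mulnA leq_mul.
Qed.

End Avg.

Lemma binle (u n k : nat) : (u <= n)%N -> (0 < k)%N -> ('C(u, k) * n <= u * 'C(n, k))%N.
Proof.
move=> un; case: k => [//|k] _.
have Hu := mul_bin_diag u k; have Hn := mul_bin_diag n k.
have Hb : ('C(u.-1, k) <= 'C(n.-1, k))%N by apply: leq_bin2l; lia.
rewrite -(leq_pmul2l (ltn0Sn k)) mulnA -Hu mulnCA -Hn.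
rewrite mulnC [X in (_ <= X)%N]mulnCA; apply: leq_mul => //; exact: leq_mul.
Qed.

From Stdlib Require Import Reals Lra.
Open Scope R_scope.

Lemma ivt_set (T : finType) (phi : {set T} -> R) (c d : R) (P : {set T}) :
  0 <= d ->
  (forall (Q : {set T}) e, Q \subset P -> e \in P -> Rabs (phi (e |: Q) - phi Q) <= d) ->
  c <= phi set0 -> phi P <= c -> exists Q : {set T}, Q \subset P /\ Rabs (phi Q - c) <= d.
Proof.
move=> d0; move: {2}#|P| (erefl #|P|) => N; elim: N P => [|N IH] P cP.
  move/eqP: cP; rewrite cards_eq0 => /eqP -> _ H1 H2; exists set0; split => //.
  have -> : phi set0 - c = 0 by lra.
  by rewrite Rabs_R0.
have : (0 < #|P|)%nat by rewrite cP.
case/card_gt0P => e eP Hd H0 HP.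
have P'P : P :\ e \subset P by apply: subsetDl.
have [HP'|HP'] := Rle_lt_dec (phi (P :\ e)) c.
  have c1 : #|P :\ e| = N by move: cP; rewrite (cardsD1 e P) eP add1n => [[]].
  have c2 : forall (Q : {set T}) e', Q \subset P :\ e -> e' \in P :\ e ->
      Rabs (phi (e' |: Q) - phi Q) <= d.
    move=> Q e' QP e'P; apply: Hd; first exact: subset_trans QP P'P.
    exact: (subsetP P'P).
  have [Q [QP HQ]] := IH (P :\ e) c1 c2 H0 HP'.
  by exists Q; split => //; exact: subset_trans QP P'P.
exists P; split => //.
have := Hd (P :\ e) e P'P eP; rewrite setD1K // => H.
rewrite Rabs_left1; last lra.

rewrite Rabs_minus_sym in H; have := Rle_abs (phi (P :\ e) - phi P); lra.
Qed.

From Stdlib Require Import Reals Lra.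
Open Scope R_scope.

Lemma ffact_lo (u l : nat) : (l <= u)%nat -> (INR u - INR l) ^ l <= INR (u ^_ l).
Proof.
elim: l => [|l IH] lu; first by rewrite ffactn0 /=; lra.
have lu' : (l <= u)%nat by apply: ltnW.
rewrite ffactnSr mult_INR S_INR /=.
have Hs : INR (u - l) = INR u - INR l by rewrite minus_INR //; apply/leP.
rewrite Hs.
have h1 : 0 <= INR u - (INR l + 1).
  have : INR l.+1 <= INR u by apply: le_INR; apply/leP.
  rewrite S_INR; lra.
have h2 : (INR u - (INR l + 1)) ^ l <= (INR u - INR l) ^ l.
  apply: pow_incr; lra.
have h3 := IH lu'.
have h4 : 0 <= (INR u - (INR l + 1)) ^ l by apply: pow_le.
rewrite Rmult_comm.
apply: Rmult_le_compat => //; lra.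
Qed.

Lemma ffact_hi (n l : nat) : INR (n ^_ l) <= INR n ^ l.
Proof.
elim: l => [|l IH]; first by rewrite ffactn0 /=; lra.
rewrite ffactnSr mult_INR /= Rmult_comm.
apply: Rmult_le_compat; try apply: pos_INR => //.
- apply: le_INR; apply/leP; exact: leq_subr.
- exact: IH.
Qed.

Lemma bernoulli (x : R) (l : nat) : 0 <= x <= 1 -> 1 - INR l * x <= (1 - x) ^ l.
Proof.
move=> hx; elim: l => [|l IH]; first by rewrite /=; lra.
rewrite S_INR /=.
have h : 0 <= INR l * x * x by apply: Rmult_le_pos; [apply: Rmult_le_pos; [apply: pos_INR|lra]|lra].
have : (1 - x) * (1 - INR l * x) <= (1 - x) * (1 - x) ^ l.
  apply: Rmult_le_compat_l; lra.
nra.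
Qed.

From Stdlib Require Import Reals Lra Lia ZArith.
Open Scope R_scope.

Lemma choose_u (nu m : R) (k l n : nat) : 0 < m <= 1 -> 0 < nu <= m / 8 ->
  (2 <= k)%nat -> (1 <= l)%nat -> 4 * INR k ^ 2 * INR l ^ 2 <= nu * INR n ->
  exists u : nat, (l <= u)%nat /\ (u <= n)%nat /\
    INR 'C(u, k) <= Rpower (2 * nu / m) (/ INR l) * INR 'C(n, k) /\
    nu / m * INR (n ^_ l) <= INR (u ^_ l).
Proof.
move=> [m0 m1] [nu0 num] k2 l1 hN.
have K2 : 2 <= INR k by apply: (le_INR 2); apply/leP.
have L1 : 1 <= INR l by apply: (le_INR 1); apply/leP.
set q := 2 * nu / m.
have q0 : 0 < q by rewrite /q; apply: Rdiv_lt_0_compat; lra.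
have q1 : q <= 1 / 4.
  rewrite /q; apply/(Rmult_le_reg_r m) => //; field_simplify; lra.
have qnu : 2 * nu <= q.
  rewrite /q; apply/(Rmult_le_reg_r m) => //; field_simplify; try lra; nra.
set p := Rpower q (/ INR l).
have lnq : ln q < 0 by rewrite -ln_1; apply: ln_increasing; lra.
have il0 : 0 < / INR l by apply: Rinv_0_lt_compat; lra.
have il1 : / INR l <= 1.
  rewrite -Rinv_1; apply: Rinv_le_contravar; lra.
have p0 : 0 < p by rewrite /p /Rpower; apply: exp_pos.
have p1 : p <= 1.
  rewrite /p /Rpower -exp_0.
  have : / INR l * ln q < 0 by nra.
  move=> h; left; exact: exp_increasing.
have pq : q <= p.
  rewrite /p /Rpower -{1}(exp_ln q q0).
  have : ln q <= / INR l * ln q by nra.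
  case=> h; [left; exact: exp_increasing | right; by rewrite -h].
have pl : p ^ l = q.
  rewrite -Rpower_pow // /p Rpower_mult Rinv_l ?Rpower_1 //; lra.
set Nn := INR n in hN *.
have Nbig : 8 * INR k ^ 2 * INR l ^ 2 <= q * Nn.
  have h0 : 0 <= Nn by apply: pos_INR.
  have := Rmult_le_compat_r Nn _ _ h0 qnu. lra.
have Nn0 : 0 < Nn.
  have : 0 < INR k ^ 2 * INR l ^ 2 by apply: Rmult_lt_0_compat; apply: pow_lt; lra.
  nra.
set y := p * Nn.
have yq : q * Nn <= y by rewrite /y; apply: Rmult_le_compat_r; lra.
have ybig : 32 * INR l ^ 2 <= y.
  have : 4 <= INR k ^ 2 by nra.
  have : 0 <= INR l ^ 2 by apply: pow_le; lra.
  nra.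
have [hu1 hu2] := archimed y.
set z := up y in hu1 hu2 *.
have L2 : 1 <= INR l ^ 2 by simpl; nra.
have z1 : (1 <= z)%Z.
  apply: le_IZR; have : 1 <= y by lra.
  change (IZR 1) with 1; lra.
set u := Z.to_nat (z - 1).
have Hu : INR u = IZR z - 1.
  rewrite /u INR_IZR_INZ Z2Nat.id; last lia.
  by rewrite minus_IZR.
have uy : INR u <= y by lra.
have uy' : y - 1 < INR u by lra.
exists u.
have ul : (l <= u)%nat.
  apply/leP; apply: INR_le.
  have : INR l <= INR l ^ 2 by simpl; nra.
  lra.
have un : (u <= n)%nat.
  apply/leP; apply: INR_le.
  rewrite -/Nn. have : y <= Nn by rewrite /y; nra.
  lra.
split => //; split => //; split.
- have hb := binle un (ltnW k2).
  have hbR : INR 'C(u, k) * Nn <= INR u * INR 'C(n, k).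
    rewrite /Nn -!mult_INR; apply: le_INR; apply/leP; exact: hb.
  have C0 : 0 <= INR 'C(n, k) by apply: pos_INR.
  apply: (Rmult_le_reg_r Nn) => //.
  apply: Rle_trans hbR _.
  rewrite -/p. have : INR u * INR 'C(n, k) <= y * INR 'C(n, k) by apply: Rmult_le_compat_r.
  rewrite /y; lra.
-
  have e1 := ffact_lo ul.
  have e2 := ffact_hi n l.
  set x := (1 + INR l) / y.
  have y0 : 0 < y by lra.
  have x0 : 0 <= x by rewrite /x; apply: Rmult_le_pos; [lra| left; apply: Rinv_0_lt_compat; lra].
  have lx : INR l * x <= 1 / 2.
    rewrite /x; apply/(Rmult_le_reg_r y) => //; field_simplify; last lra.
    have : INR l <= INR l ^ 2 by simpl; nra.
    lra.
  have x1 : x <= 1.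
    have : x <= INR l * x by nra.
    lra.
  have ber := bernoulli l (conj x0 x1).
  have ye : y - 1 - INR l = y * (1 - x) by rewrite /x; field; lra.
  have h1 : (y - 1 - INR l) ^ l <= (INR u - INR l) ^ l.
    apply: pow_incr; split; last lra.
    rewrite ye; apply: Rmult_le_pos; lra.
  have h2 : (y - 1 - INR l) ^ l = q * Nn ^ l * (1 - x) ^ l.
    by rewrite ye Rpow_mult_distr /y Rpow_mult_distr pl.
  have h3 : 1 / 2 <= (1 - x) ^ l by lra.
  have h4 : 0 <= q * Nn ^ l by apply: Rmult_le_pos; [lra | apply: pow_le; lra].
  have h5 : q * Nn ^ l / 2 <= q * Nn ^ l * (1 - x) ^ l by nra.
  have h6 : nu / m * INR (n ^_ l) <= q * Nn ^ l / 2.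
    have : nu / m = q / 2 by rewrite /q; field; lra.
    move=> ->. have : 0 <= q by lra. rewrite -/Nn in e2. nra.
  lra.
Qed.

From Stdlib Require Import Reals Lra Lia ZArith.
Open Scope R_scope.

Lemma lip_real (k l n : nat) (F : {set {set 'I_l}}) (G G' : {set {set 'I_n}}) e :
  kgraph k F -> (1 < k)%nat -> (1 <= l)%nat -> G \subset G' -> G' :\: G \subset [set e] ->
  (#|e| <= k)%nat -> (l * l * (k * k) <= n.-1)%nat ->
  Rabs (t_inj F G' - t_inj F G) <= / INR n.
Proof.
move=> kF k1 l1 GG' dG ek big.
have [h1 h2] := lip kF k1 GG' dG ek.
have lb : (l <= l * l * (k * k))%nat.
  rewrite -mulnA leq_pmulr // !muln_gt0; apply/and3P; split; lia.
have n1 : (0 < n.-1)%nat by lia.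
have ln : (l <= n)%nat by lia.
have N0 : 0 < INR (n ^_ l).
  apply: (lt_INR 0); apply/ltP; by rewrite ffact_gt0.
have n0 : 0 < INR n by apply: (lt_INR 0); apply/ltP; lia.
set a := inj_hom F G in h1 h2 *; set a' := inj_hom F G' in h1 h2 *.
have h3 : ((a' - a) * n <= n ^_ l)%nat.
  rewrite -(leq_pmul2l n1).
  apply: leq_trans (_ : (l * l * (k * k) * n ^_ l <= _)%nat); last by rewrite leq_mul.
  apply: leq_trans h2; rewrite mulnCA mulnA; lia.
have h4 : INR (a' - a) * INR n <= INR (n ^_ l).
  rewrite -mult_INR; apply: le_INR; exact/leP.
have h5 : t_inj F G' - t_inj F G = INR (a' - a) / INR (n ^_ l).
  rewrite /t_inj -/a -/a' minus_INR; last exact/leP.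
  field; lra.
rewrite h5 Rabs_right; last first.
  apply: Rle_ge; apply: Rmult_le_pos; [apply: pos_INR | left; apply: Rinv_0_lt_compat; lra].
apply/(Rmult_le_reg_r (INR (n ^_ l))) => //.
apply/(Rmult_le_reg_r (INR n)) => //.
field_simplify; lra.
Qed.

From Stdlib Require Import Reals Lra Lia ZArith.
Open Scope R_scope.

Theorem proposition11p2 :
  exists nu0 : R -> R -> R,
    (forall a b, 0 < a -> 0 < b -> 0 < nu0 a b) /\
    (forall a a' b b', 0 < a -> 0 < b -> a <= a' -> b <= b' ->
        nu0 a b <= nu0 a' b') /\
  exists g : R -> R -> R -> R,
    (forall x y z, 0 < x -> 0 < y -> 0 < z -> 0 < g x y z) /\
    (forall x x' y y' z z', 0 < x -> 0 < y -> 0 < z ->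
        x <= x' -> y <= y' -> z <= z' -> g x y z <= g x' y' z') /\
  forall (alpha nu : R) (k l n : nat),
    0 < alpha < 1 ->
    0 < nu -> nu <= nu0 alpha (1 - alpha) ->
    (2 <= k)%nat -> (1 <= l)%nat -> (1 <= n)%nat ->
    / INR n <= g nu (/ INR k) (/ INR l) ->
    forall (F : {set {set 'I_l}}) (H : {set {set 'I_n}}),
      kgraph k F -> kgraph k H ->
      Rabs (t_inj F H - alpha) <= nu ->
      exists G : {set {set 'I_n}},
        kgraph k G /\
        Rabs (t_inj F G - alpha) <= / INR n /\
        INR (symdiff_card G H) <=
          Rpower (2 * nu / Rmin alpha (1 - alpha)) (/ INR l) * INR 'C(n, k).
Proof.
exists (fun a b => Rmin a b / 8); split.
  move=> a b a0 b0; have := Rmin_pos a b a0 b0; lra.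
split.
  move=> a a' b b' a0 b0 aa bb; rewrite /Rmin.
  case: (Rle_dec a b); case: (Rle_dec a' b') => /= *; lra.
exists (fun x y z => x * y ^ 2 * z ^ 2 / 4); split.
  move=> x y z x0 y0 z0 /=.
  have := pow_lt y 2 y0; have := pow_lt z 2 z0; move=> h1 h2.
  have : 0 < x * y ^ 2 by apply: Rmult_lt_0_compat.
  move=> h3; have : 0 < x * y ^ 2 * z ^ 2 by apply: Rmult_lt_0_compat.
  lra.
split.
  move=> x x' y y' z z' x0 y0 z0 xx yy zz /=.
  have hy : y ^ 2 <= y' ^ 2 by apply: pow_incr; lra.
  have hz : z ^ 2 <= z' ^ 2 by apply: pow_incr; lra.
  have := pow_le y 2 (Rlt_le _ _ y0); have := pow_le z 2 (Rlt_le _ _ z0); move=> h1 h2.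
  have : x * y ^ 2 <= x' * y' ^ 2 by apply: Rmult_le_compat; lra.
  have : 0 <= x * y ^ 2 by apply: Rmult_le_pos; lra.
  move=> h3 h4.
  have : x * y ^ 2 * z ^ 2 <= x' * y' ^ 2 * z' ^ 2 by apply: Rmult_le_compat; lra.
  lra.
move=> alpha nu k l n [a0 a1] nu0 hnu k2 l1 n1 hn F H kF kH hcl.
rewrite /= in hnu hn.
set m := Rmin alpha (1 - alpha) in hnu *.
have m0 : 0 < m by apply: Rmin_pos; lra.
have ma : m <= alpha by apply: Rmin_l.
have mb : m <= 1 - alpha by apply: Rmin_r.
have K0 : 2 <= INR k by apply: (le_INR 2); apply/leP.
have L0 : 1 <= INR l by apply: (le_INR 1); apply/leP.
have Nn0 : 1 <= INR n by apply: (le_INR 1); apply/leP.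
have hN : 4 * INR k ^ 2 * INR l ^ 2 <= nu * INR n.
  have pos : 0 <= 4 * INR k ^ 2 * INR l ^ 2 * INR n.
    apply: Rmult_le_pos; last lra.
    apply: Rmult_le_pos; [apply: Rmult_le_pos; [lra|apply: pow_le; lra]|apply: pow_le; lra].
  have := Rmult_le_compat_l _ _ _ pos hn.
  have -> : 4 * INR k ^ 2 * INR l ^ 2 * INR n * / INR n = 4 * INR k ^ 2 * INR l ^ 2.
    field; lra.
  have -> : 4 * INR k ^ 2 * INR l ^ 2 * INR n * (nu * (/ INR k) ^ 2 * (/ INR l) ^ 2 / 4) =
     nu * INR n.
    field; lra.
  done.
have big : (l * l * (k * k) <= n.-1)%nat.
  have : INR (l * l * (k * k)).+1 <= INR n.
    rewrite S_INR !mult_INR.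
    have : INR k ^ 2 * INR l ^ 2 >= 1.
      have : 4 <= INR k ^ 2 by simpl; nra.
      have : 1 <= INR l ^ 2 by simpl; nra.
      nra.
    have : nu * INR n <= INR n / 8 by nra.
    simpl in hN |- *. nra.
  move/INR_le/leP; lia.
have m1 : m <= 1 by lra.
have [u [ul [un [C1 C2]]]] := choose_u (conj m0 m1) (conj nu0 hnu) k2 l1 hN.
have ln : (l <= n)%nat by lia.
have N0 : 0 < INR (n ^_ l).
  apply: (lt_INR 0); apply/ltP; by rewrite ffact_gt0.
have In0 : 0 <= / INR n by left; apply: Rinv_0_lt_compat; lra.
have k1 : (1 < k)%nat by [].
have SI (G : {set {set 'I_n}}) : SG F G \subset Inj l n.
  by apply/subsetP => f; rewrite !inE => /andP [].
case: (eqVneq F set0) => [F0 | Fn0].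
  exfalso.
  have e1 : inj_hom F H = n ^_ l.
    rewrite -(card_Inj l n) inj_homE; apply: eq_card => f; rewrite !inE F0.
    have -> : [forall e in (set0 : {set {set 'I_l}}), [set f x | x in e] \in H] by apply/forall_inP => e; rewrite inE.
    by rewrite andbT.
  have Nne : INR (n ^_ l) <> 0 by apply: Rgt_not_eq.
  have : t_inj F H = 1 by rewrite /t_inj e1 /Rdiv Rinv_r.
  move=> e2; rewrite e2 in hcl; move: hcl; rewrite Rabs_right; lra.
case/set0Pn: Fn0 => eps0 eps0F.
have keps0 : #|eps0| = k by apply/eqP; move/forall_inP: kF; apply.
have lun : (l <= u <= n)%nat by rewrite ul un.
have imKu (U : {set 'I_n}) (f : {ffun 'I_l -> 'I_n}) (eps : {set 'I_l}) :
    injectiveb f -> eps \in F -> f @: [set: 'I_l] \subset U ->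
    f @: eps \in [set A : {set 'I_n} | A \subset U & #|A| == k].
  move=> /injectiveP fi epsF sub; rewrite inE; apply/andP; split.
    by apply: subset_trans sub; apply: imsetS; apply: subsetT.
  rewrite card_imset //; by move/forall_inP: kF; apply.
have cardKu (U : {set 'I_n}) : #|U| = u ->
    #|[set A : {set 'I_n} | A \subset U & #|A| == k]| = 'C(u, k).
  by move=> Uu; rewrite cards_draws Uu.
have [hT|hT] := Rle_lt_dec alpha (t_inj F H).
- have [U [Uu hav]] := avg (SI H) lun.
  set Ku := [set A : {set 'I_n} | A \subset U & #|A| == k] in imKu.
  set C := [set f in SG F H | f @: [set: 'I_l] \subset U] in hav.
  set P := H :&: Ku.
  have hstep : forall (Q : {set {set 'I_n}}) e, Q \subset P -> e \in P ->
      Rabs (t_inj F (H :\: (e |: Q)) - t_inj F (H :\: Q)) <= / INR n.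
    move=> Q e QP eP; rewrite Rabs_minus_sym.
    apply: (lip_real (e := e)) kF k1 l1 _ _ _ big.
    + by apply/subsetP => x; rewrite !inE => /andP [/norP [_ ->] ->].
    + apply/subsetP => x; rewrite !inE.
      by case: (x == e); case: (x \in Q); case: (x \in H).
    + by move: eP; rewrite !inE => /andP [_ /andP [_ /eqP ->]].
  have phi0 : alpha <= t_inj F (H :\: set0) by rewrite setD0.
  have phiP : t_inj F (H :\: P) <= alpha.
    have sub1 : SG F (H :\: P) \subset SG F H :\: C.
      apply/subsetP => f; rewrite /C /SG !inE => /andP [fi /forall_inP fall].
      have fH : [forall e in F, f @: e \in H].
        by apply/forall_inP => e /fall; rewrite inE => /andP [].
      rewrite fi fH /= andbT; apply/negP => sub.
      have := fall _ eps0F; rewrite inE => /andP [/negP nP fe].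
      apply: nP; rewrite /P inE fe /=; exact: (imKu U f eps0 fi eps0F sub).
    have cC : C \subset SG F H by apply/subsetP => f; rewrite inE => /andP [].
    have eC : #|SG F H :\: C| = (#|SG F H| - #|C|)%nat by rewrite cardsD (setIidPr cC).
    have hI : (inj_hom F (H :\: P) <= inj_hom F H - #|C|)%nat.
      rewrite !inj_homE -eC; exact: subset_leq_card sub1.
    have hC : (#|C| <= inj_hom F H)%nat by rewrite inj_homE; exact: subset_leq_card.
    have hIR : INR (inj_hom F (H :\: P)) <= INR (inj_hom F H) - INR #|C|.
      rewrite -minus_INR; [apply: le_INR; exact/leP | exact/leP].
    have havR : INR (inj_hom F H) * INR (u ^_ l) <= INR #|C| * INR (n ^_ l).
      rewrite -!mult_INR; apply: le_INR; apply/leP; exact: hav.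
    move: hcl hIR havR C2; rewrite /t_inj.
    set Iv := INR (inj_hom F (H :\: P)); set Sv := INR (inj_hom F H).
    set Cv := INR #|C|; set Uv := INR (u ^_ l); set Nv := INR (n ^_ l).
    move=> hcl hIR havR C2.
    have hS : Sv <= (alpha + nu) * Nv.
      have : Sv / Nv - alpha <= nu by apply: Rle_trans (Rle_abs _) hcl.
      move=> h; have : Sv / Nv <= alpha + nu by lra.
      move=> h'; have := Rmult_le_compat_r Nv _ _ (Rlt_le _ _ N0) h'.
      by rewrite /Rdiv Rmult_assoc Rinv_l ?Rmult_1_r //; apply: Rgt_not_eq.
    have S0 : 0 <= Sv by apply: pos_INR.
    set r := nu / m in C2.
    have r0 : 0 < r by rewrite /r; apply: Rdiv_lt_0_compat.
    have r1 : r <= 1 / 8 by rewrite /r; apply/(Rmult_le_reg_r m) => //; field_simplify; lra.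
    have ar : nu <= alpha * r.
      have : r * m = nu by rewrite /r; field; lra.
      move=> h; have := Rmult_le_compat_l r _ _ (Rlt_le _ _ r0) ma. lra.
    have hCv : Sv * r <= Cv.
      apply: (Rmult_le_reg_r Nv) => //.
      have := Rmult_le_compat_l Sv _ _ S0 C2. lra.
    apply/(Rmult_le_reg_r Nv) => //.
    rewrite /Rdiv Rmult_assoc Rinv_l ?Rmult_1_r; last by apply: Rgt_not_eq.
    have : Iv <= Sv * (1 - r) by lra.
    have : Sv * (1 - r) <= (alpha + nu) * Nv * (1 - r) by apply: Rmult_le_compat_r; lra.
    have : (alpha + nu) * (1 - r) <= alpha by nra.
    move=> h1 h2 h3.
    have := Rmult_le_compat_r Nv _ _ (Rlt_le _ _ N0) h1.
    lra.
  have [Q [QP HQ]] := ivt_set In0 hstep phi0 phiP.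
  exists (H :\: Q); split; last split => //.
    by apply/forall_inP => e; rewrite inE => /andP [_ eH]; move/forall_inP: kH; apply.
  have QH : Q \subset H by apply: subset_trans QP (subsetIl _ _).
  have -> : symdiff_card (H :\: Q) H = #|Q|.
    rewrite /symdiff_card; apply: eq_card => x; rewrite !inE.
    case: (boolP (x \in Q)) => xQ /=; first by rewrite (subsetP QH).
    by case: (x \in H).
  apply: Rle_trans C1; apply: le_INR; apply/leP.
  rewrite -(cardKu U Uu); apply: leq_trans (subset_leq_card QP) _.
  exact/subset_leq_card/subsetIr.
- have SI' : Inj l n :\: SG F H \subset Inj l n by apply: subsetDl.
  have [U [Uu hav]] := avg SI' lun.
  set Ku := [set A : {set 'I_n} | A \subset U & #|A| == k].
  set C := [set f in Inj l n :\: SG F H | f @: [set: 'I_l] \subset U] in hav.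
  set P := Ku :\: H.
  have hstep : forall (Q : {set {set 'I_n}}) e, Q \subset P -> e \in P ->
      Rabs (- t_inj F (H :|: (e |: Q)) - - t_inj F (H :|: Q)) <= / INR n.
    move=> Q e QP eP.
    have -> : - t_inj F (H :|: (e |: Q)) - - t_inj F (H :|: Q) =
       - (t_inj F (H :|: (e |: Q)) - t_inj F (H :|: Q)) by ring.
    rewrite Rabs_Ropp.
    apply: (lip_real (e := e)) kF k1 l1 _ _ _ big.
    + by apply/subsetP => x; rewrite !inE => /orP [->|->] //; rewrite !orbT.
    + apply/subsetP => x; rewrite !inE.
      by case: (x == e); case: (x \in Q); case: (x \in H).
    + by move: eP; rewrite !inE => /andP [_ /andP [_ /eqP ->]].
  have phi0 : - alpha <= - t_inj F (H :|: set0) by rewrite setU0; lra.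
  have phiP : - t_inj F (H :|: P) <= - alpha.
    have cSG : C \subset SG F (H :|: P).
      apply/subsetP => f; rewrite /C !inE => /andP [/andP [_ fi] sub].
      rewrite fi /=; apply/forall_inP => e eF.
      have := imKu U f e fi eF sub; rewrite -/Ku => eK.
      rewrite inE; case: (boolP (_ \in H)) => //= nH; by rewrite /P inE nH eK.
    have HSG : SG F H \subset SG F (H :|: P) by apply: SG_mono; apply: subsetUl.
    have dj : SG F H :&: C = set0.
      apply/setP => f; rewrite in_setI in_set0; apply/negP => /andP [h1]; rewrite /C in_set in_setD h1 /=; by [].
    have hI : (inj_hom F H + #|C| <= inj_hom F (H :|: P))%nat.
      have := cardsU (SG F H) C; rewrite dj cards0 subn0 !inj_homE => <-.
      by apply: subset_leq_card; rewrite subUset HSG cSG.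
    have hS : #|Inj l n :\: SG F H| = (n ^_ l - inj_hom F H)%nat.
      by rewrite cardsD (setIidPr (SI H)) card_Inj.
    have hHN : (inj_hom F H <= n ^_ l)%nat.
      by rewrite inj_homE -(card_Inj l n); apply: subset_leq_card.
    have hIR : INR (inj_hom F H) + INR #|C| <= INR (inj_hom F (H :|: P)).
      rewrite -plus_INR; apply: le_INR; exact/leP.
    have havR : (INR (n ^_ l) - INR (inj_hom F H)) * INR (u ^_ l) <= INR #|C| * INR (n ^_ l).
      rewrite -minus_INR; last exact/leP.
      rewrite -!mult_INR; apply: le_INR; apply/leP; rewrite hS in hav; exact: hav.
    move: hcl hT hIR havR C2; rewrite /t_inj.
    set Iv := INR (inj_hom F (H :|: P)); set Hv := INR (inj_hom F H).
    set Cv := INR #|C|; set Uv := INR (u ^_ l); set Nv := INR (n ^_ l).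
    move=> hcl hT hIR havR C2.
    have N0' : 0 < Nv := N0.
    have Nne : Nv <> 0 by apply: Rgt_not_eq.
    have hH1 : (alpha - nu) * Nv <= Hv.
      have : alpha - Hv / Nv <= nu.
        rewrite Rabs_minus_sym in hcl; apply: Rle_trans (Rle_abs _) hcl.
      move=> h; have : alpha - nu <= Hv / Nv by lra.
      move=> h'; have := Rmult_le_compat_r Nv _ _ (Rlt_le _ _ N0) h'.
      by rewrite /Rdiv Rmult_assoc Rinv_l ?Rmult_1_r.
    have hH2 : Hv <= alpha * Nv.
      have := Rmult_le_compat_r Nv _ _ (Rlt_le _ _ N0) (Rlt_le _ _ hT).
      by rewrite /Rdiv Rmult_assoc Rinv_l ?Rmult_1_r.
    set r := nu / m in C2.
    have r0 : 0 < r by rewrite /r; apply: Rdiv_lt_0_compat.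
    have rm : r * m = nu by rewrite /r; field; lra.
    have hS0 : m * Nv <= Nv - Hv.
      have := Rmult_le_compat_r Nv _ _ (Rlt_le _ _ N0) mb.
      lra.
    have hCv : (Nv - Hv) * r <= Cv.
      apply: (Rmult_le_reg_r Nv) => //.
      have h00 : 0 <= m * Nv by apply: Rmult_le_pos; lra.
      have h0 : 0 <= Nv - Hv by lra. have := Rmult_le_compat_l (Nv - Hv) _ _ h0 C2. lra.
    have hCv' : nu * Nv <= Cv.
      have := Rmult_le_compat_r r _ _ (Rlt_le _ _ r0) hS0.
      have -> : m * Nv * r = nu * Nv by rewrite -rm; ring.
      lra.
    apply: Ropp_le_contravar.
    apply/(Rmult_le_reg_r Nv) => //.
    rewrite /Rdiv Rmult_assoc Rinv_l ?Rmult_1_r //.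
    lra.
  have [Q [QP HQ]] := ivt_set In0 hstep phi0 phiP.
  exists (H :|: Q); split; last split.
  + apply/forall_inP => e; rewrite inE => /orP [eH|eQ]; first by move/forall_inP: kH; apply.
    by move: (subsetP QP e eQ); rewrite !inE => /andP [_ /andP [_ ->]].
  + have -> : t_inj F (H :|: Q) - alpha = - (- t_inj F (H :|: Q) - - alpha) by ring.
    by rewrite Rabs_Ropp.
  have QH : forall x, x \in Q -> (x \in H) = false.
    by move=> x /(subsetP QP); rewrite inE => /andP [/negPf ->].
  have -> : symdiff_card (H :|: Q) H = #|Q|.
    rewrite /symdiff_card; apply: eq_card => x; rewrite !inE.
    case: (boolP (x \in Q)) => xQ /=.
      by rewrite (QH _ xQ).
    by case: (x \in H).
  apply: Rle_trans C1; apply: le_INR; apply/leP.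
  rewrite -(cardKu U Uu); apply: leq_trans (subset_leq_card QP) _.
  exact/subset_leq_card/subsetDl.
Qed.
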